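(* Let $S$ be a semidomain. The following are equivalent: (a) $S$ is a BFS; (b) $S[x]$ is a BFS; (c) $S[x^{\pm1}]$ is a BFS.
   Context: A semidomain is a subset $S$ of an integral domain $R$ containing $0$ and $1$ and closed under addition and multiplication; $S^*=S\setminus\{0\}$ is a monoid under multiplication, with units forming $S^\times$. An atom is a nonunit $a\in S^*$ such that $a=bc$ with $b,c\in S^*$ forces $b$ or $c$ to be a unit; $S$ is atomic if every nonunit of $S^*$ is a finite product of atoms. $S$ is a bounded factorization semidomain (BFS) if $S$ is atomic and, for each nonunit $b\in S^*$, the set of lengths $\{\ell : b=a_1\cdots a_\ell \text{ with } a_i \text{ atoms}\}$ is finite. $S[x]$ (resp. $S[x^{\pm1}]$) is the semidomain of polynomials (resp. Laurent polynomials) in $R[x]$ (resp. $R[x^{\pm1}]$) with coefficients in $S$. *)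

(* Defs.v *)
From HB Require Import structures.
From mathcomp Require Import all_boot all_order all_algebra.
Set Implicit Arguments. Unset Strict Implicit. Unset Printing Implicit Defensive.
Import GRing.Theory.
Local Open Scope ring_scope.

Definition is_semidomain (R : idomainType) (S : R -> Prop) : Prop :=
  [/\ S 0, S 1, (forall a b, S a -> S b -> S (a + b))
    & (forall a b, S a -> S b -> S (a * b))].

Section Factorization.
Variables (T : idomainType) (S : T -> Prop).

Definition sunit (u : T) : Prop :=
  [/\ S u, u != 0 & exists v, [/\ S v, v != 0 & u * v = 1]].

Definition satom (a : T) : Prop :=
  [/\ S a, a != 0, ~ sunit a &
      forall b c, S b -> b != 0 -> S c -> c != 0 -> a = b * c ->
        sunit b \/ sunit c].

Definition factor_length (b : T) (l : nat) : Prop :=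
  exists s : seq T, [/\ size s = l, (forall a, a \in s -> satom a)
                     & b = \prod_(a <- s) a].

Definition atomic : Prop :=
  forall b, S b -> b != 0 -> ~ sunit b -> exists l, factor_length b l.

Definition BFS : Prop :=
  atomic /\
  forall b, S b -> b != 0 -> ~ sunit b ->
    exists N : nat, forall l, factor_length b l -> (l <= N)%N.

End Factorization.

Definition polyS (R : idomainType) (S : R -> Prop) : {poly R} -> Prop :=
  fun p => forall i, S p`_i.

(* S[x^{+-1}] : Laurent polynomials with coefficients in S, realized inside
   the integral domain Frac(R[x]) (which contains R[x^{+-1}]) as the elements
   p / x^n with p in S[x] and n : nat. *)
Definition laurentS (R : idomainType) (S : R -> Prop)
  : {fraction {poly R}} -> Prop :=
  fun f => exists (p : {poly R}) (n : nat),
    polyS S p /\ f = tofrac p / tofrac ('X^n).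

(* Main.v *)
Require Import Defs.
From mathcomp Require Import all_boot all_order all_algebra.
From Stdlib Require Import Classical ClassicalEpsilon Lia.
From mathcomp Require Import zify.
Set Implicit Arguments. Unset Strict Implicit. Unset Printing Implicit Defensive.
Import GRing.Theory.
Local Open Scope ring_scope.


Section Gen.
Variables (T : idomainType) (S : T -> Prop).
Hypothesis hS : is_semidomain S.

Let S0 : S 0. Proof. by case: hS. Qed.
Let S1 : S 1. Proof. by case: hS. Qed.
Let SD a b : S a -> S b -> S (a + b). Proof. by case: hS => _ _ h _; apply: h. Qed.
Let SM a b : S a -> S b -> S (a * b). Proof. by case: hS => _ _ _ h; apply: h. Qed.

Lemma sunit1 : sunit S 1.
Proof. by split => //; [exact: oner_neq0 | exists 1; split => //; [exact: oner_neq0|rewrite mulr1]]. Qed.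

Lemma sunit_mul b c : sunit S b -> sunit S c -> sunit S (b * c).
Proof.
case=> Sb b0 [v [Sv v0 bv]] [Sc c0 [w [Sw w0 cw]]].
split; [exact: SM | exact: mulf_neq0 |].
exists (w * v); split; [exact: SM | exact: mulf_neq0 |].
by rewrite mulrA -(mulrA b) cw mulr1 bv.
Qed.

Lemma sunit_mull b c : S b -> b != 0 -> S c -> c != 0 -> sunit S (b * c) -> sunit S b.
Proof.
move=> Sb b0 Sc c0 [_ _ [v [Sv v0 e]]].
split => //; exists (c * v); split; [exact: SM | |by rewrite mulrA].
apply/eqP => cv0; move: e; rewrite -mulrA cv0 mulr0 => /eqP; by rewrite eq_sym oner_eq0.
Qed.

Lemma sunit_mulr b c : S b -> b != 0 -> S c -> c != 0 -> sunit S (b * c) -> sunit S c.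
Proof. by move=> Sb b0 Sc c0; rewrite mulrC; apply: sunit_mull. Qed.

Lemma prod_atoms (s : seq T) : (forall a, a \in s -> satom S a) ->
  S (\prod_(a <- s) a) /\ \prod_(a <- s) a != 0.
Proof.
elim: s => [|a s IH] H; first by rewrite big_nil; split => //; exact: oner_neq0.
have [Sa a0 _ _] := H a (mem_head _ _).
have [Ss s0] : S (\prod_(a <- s) a) /\ \prod_(a <- s) a != 0 by apply: IH => x xs; apply: H; rewrite inE xs orbT.
by rewrite big_cons; split; [exact: SM | exact: mulf_neq0].
Qed.

Definition lenfun (l : T -> nat) :=
  (forall b c, S b -> b != 0 -> S c -> c != 0 -> (l b + l c <= l (b * c)%R)%N) /\
  (forall b, S b -> b != 0 -> ~ sunit S b -> (1 <= l b)%N).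

Lemma lenfun_BFS l : lenfun l -> BFS S.
Proof.
case=> Hsup Hpos.
have bound : forall s : seq T, (forall a, a \in s -> satom S a) ->
    (size s <= l (\prod_(a <- s) a)%R)%N.
  elim=> [|a s IH] H //=.
  have [Sa a0 ua _] := H a (mem_head _ _).
  have Hs : forall x, x \in s -> satom S x by move=> x xs; apply: H; rewrite inE xs orbT.
  have [Ss s0] := prod_atoms Hs.
  rewrite big_cons; apply: leq_trans (Hsup _ _ Sa a0 Ss s0).
  by rewrite -add1n leq_add // ?Hpos //; apply: IH.
split; last first.
  move=> b Sb b0 ub; exists (l b) => k [s [<- Hs ->]]; exact: bound.
suff H : forall n b, (l b < n)%N -> S b -> b != 0 -> ~ sunit S b -> exists k, factor_length S b k.
  by move=> b; apply: (H (l b).+1).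
elim=> [|n IH] b //= lbn Sb b0 ub.
case: (classic (exists k, factor_length S b k)) => // Hno.
exists 1%N, [:: b]; split => //; last by rewrite big_seq1.
move=> a; rewrite inE => /eqP ->; split => // c d Sc c0 Sd d0 bcd.
case: (classic (sunit S c)) => uc; first by left.
case: (classic (sunit S d)) => ud; first by right.
exfalso; apply: Hno.
have := Hsup _ _ Sc c0 Sd d0; rewrite -bcd => le.
have lc := Hpos _ Sc c0 uc; have ld := Hpos _ Sd d0 ud.
have [k1 [s1 [e1 H1 p1]]] : exists k, factor_length S c k.
  apply: (IH c) => //; lia.
have [k2 [s2 [e2 H2 p2]]] : exists k, factor_length S d k.
  apply: (IH d) => //; lia.
exists (k1 + k2)%N, (s1 ++ s2); split.
- by rewrite size_cat e1 e2.
- by move=> x; rewrite mem_cat => /orP [] ?; [apply: H1 | apply: H2].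
- by rewrite big_cat /= -p1 -p2 bcd.
Qed.

Lemma max_exists (P : nat -> Prop) N : (exists x, P x) -> (forall l, P l -> (l <= N)%N) ->
  exists m, P m /\ forall l, P l -> (l <= m)%N.
Proof.
elim: N => [|N IH] [x Px] B.
  by exists x; split => // l Pl; have := B _ Pl; have := B _ Px; lia.
case: (classic (P N.+1)) => PN; first by exists N.+1.
apply: IH; first by exists x.
move=> l Pl; have := B _ Pl; case: (eqVneq l N.+1) => [e|/eqP ne]; [by rewrite e in Pl | lia].
Qed.

Definition ismax b m := factor_length S b m /\ forall l, factor_length S b l -> (l <= m)%N.

Definition lenS b : nat :=
  match excluded_middle_informative (exists m, ismax b m) with
  | left H => proj1_sig (constructive_indefinite_description _ H)
  | right _ => 0%N end.

Lemma lenS_max b m : ismax b m -> lenS b = m.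
Proof.
move=> Hm; rewrite /lenS; case: excluded_middle_informative => [H|[]]; last by exists m.
case: constructive_indefinite_description => k /= [fk bk].
case: Hm => fm bm; have := bk _ fm; have := bm _ fk; lia.
Qed.

Lemma lenS_spec b : (exists m, ismax b m /\ lenS b = m) \/ lenS b = 0%N.
Proof.
case: (classic (exists m, ismax b m)) => [[m Hm]|H]; first by left; exists m; split => //; exact: lenS_max.
right; rewrite /lenS; case: excluded_middle_informative => // H'; by case: H.
Qed.

Lemma unit_fl b l : sunit S b -> factor_length S b l -> l = 0%N.
Proof.
case: l => // l ub [[|a s] [//= [sz] Hs e]].
have [Sa a0 ua _] := Hs a (mem_head _ _).
have [Ss s0] : S (\prod_(a <- s) a) /\ \prod_(a <- s) a != 0.
  by apply: prod_atoms => x xs; apply: Hs; rewrite inE xs orbT.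
exfalso; apply: ua; apply: (@sunit_mull a (\prod_(a <- s) a)) => //.
by rewrite big_cons in e; rewrite -e.
Qed.

Lemma lenS_unit b : sunit S b -> lenS b = 0%N.
Proof. by move=> ub; case: (lenS_spec b) => // [[m [[fm _] ->]]]; exact: unit_fl fm. Qed.

Lemma atom_unit_mul u a : sunit S u -> satom S a -> satom S (u * a).
Proof.
move=> uu [Sa a0 ua Ha]; have [Su u0 [v [Sv v0 uv]]] := uu.
split; [exact: SM | exact: mulf_neq0 | by move/(sunit_mulr Su u0 Sa a0) |].
move=> x y Sx x0 Sy y0 e.
have ea : a = (v * x) * y by rewrite -mulrA -e mulrA [v * u]mulrC uv mul1r.
case: (Ha _ _ (SM Sv Sx) (mulf_neq0 v0 x0) Sy y0 ea) => [h|]; last by right.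
left; have -> : x = u * (v * x) by rewrite mulrA uv mul1r.
exact: sunit_mul.
Qed.

Lemma fl_unit_mul u c l : sunit S u -> (0 < l)%N -> factor_length S c l ->
  factor_length S (u * c) l.
Proof.
move=> uu lp [[|a s] [sz Hs e]]; first by rewrite -sz in lp.
exists ((u * a) :: s); split => //.
  move=> x; rewrite inE => /orP [/eqP ->|xs]; first by apply: atom_unit_mul => //; apply: Hs; exact: mem_head.
  by apply: Hs; rewrite inE xs orbT.
by rewrite !big_cons e big_cons mulrA.
Qed.

Lemma fl_mul b c l1 l2 : factor_length S b l1 -> factor_length S c l2 ->
  factor_length S (b * c) (l1 + l2).
Proof.
move=> [s1 [e1 H1 p1]] [s2 [e2 H2 p2]].
exists (s1 ++ s2); split.
- by rewrite size_cat e1 e2.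
- by move=> x; rewrite mem_cat => /orP [] ?; [apply: H1 | apply: H2].
- by rewrite big_cat /= -p1 -p2.
Qed.

Lemma BFS_ismax b : BFS S -> S b -> b != 0 -> ~ sunit S b -> ismax b (lenS b).
Proof.
move=> [At Bd] Sb b0 ub.
have [N HN] := Bd _ Sb b0 ub.
have [m Hm] := max_exists (At _ Sb b0 ub) HN.
by rewrite (lenS_max Hm).
Qed.

Lemma BFS_lenfun : BFS S -> exists l, lenfun l.
Proof.
move=> hB; exists lenS; split; last first.
  move=> b Sb b0 ub; have [fb mb] := BFS_ismax hB Sb b0 ub.
  have [k fk] := hB.1 _ Sb b0 ub; have := mb _ fk.
  case: k fk => [|k] fk; last by lia.
  case: fk => s [sz _ e]; case: s sz e => // _ e _.
  exfalso; apply: ub; rewrite e big_nil; exact: sunit1.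
move=> b c Sb b0 Sc c0.
have nbc : ~ sunit S (b * c) -> ismax (b * c) (lenS (b * c)).
  by move=> h; apply: BFS_ismax => //; [exact: SM | exact: mulf_neq0].
case: (classic (sunit S b)) => ub; case: (classic (sunit S c)) => uc.
- by rewrite (lenS_unit ub) (lenS_unit uc).
- rewrite (lenS_unit ub) add0n.
  have [fc _] := BFS_ismax hB Sc c0 uc.
  case: (posnP (lenS c)) => [->//|lp].
  apply: (nbc _).2; last exact: fl_unit_mul.
  by move/(sunit_mulr Sb b0 Sc c0).
- rewrite (lenS_unit uc) addn0.
  have [fb _] := BFS_ismax hB Sb b0 ub.
  case: (posnP (lenS b)) => [->//|lp].
  apply: (nbc _).2; last by rewrite mulrC; exact: fl_unit_mul.
  by move/(sunit_mull Sb b0 Sc c0).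
- have [fb _] := BFS_ismax hB Sb b0 ub; have [fc _] := BFS_ismax hB Sc c0 uc.
  apply: (nbc _).2; last exact: fl_mul.
  by move/(sunit_mull Sb b0 Sc c0).
Qed.

Lemma BFS_iff : BFS S <-> exists l, lenfun l.
Proof. by split => [|[l]]; [exact: BFS_lenfun | exact: lenfun_BFS]. Qed.

End Gen.


Section Poly.
Variables (R : idomainType) (S : R -> Prop).
Hypothesis hS : is_semidomain S.

Let S0 : S 0. Proof. by case: hS. Qed.
Let S1 : S 1. Proof. by case: hS. Qed.
Let SD a b : S a -> S b -> S (a + b). Proof. by case: hS => _ _ h _; apply: h. Qed.
Let SM a b : S a -> S b -> S (a * b). Proof. by case: hS => _ _ _ h; apply: h. Qed.

Lemma polyS_semi : is_semidomain (polyS S).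
Proof.
split.
- by move=> i; rewrite coef0.
- by move=> i; rewrite coef1; case: (i == 0)%N.
- by move=> p q Sp Sq i; rewrite coefD; apply: SD.
- move=> p q Sp Sq i; rewrite coefM; apply: (big_ind S) => //.
  by move=> j _; apply: SM.
Qed.

Lemma polyS_C c : S c -> polyS S c%:P.
Proof. by move=> Sc i; rewrite coefC; case: (i == 0)%N. Qed.

Lemma polyS_CXn c n : S c -> polyS S (c%:P * 'X^n).
Proof. by move=> Sc i; rewrite coefMXn coefC; case: (i < n)%N => //; case: (i - n == 0)%N. Qed.

Lemma polyS_MXn p n : polyS S p -> polyS S (p * 'X^n).
Proof. by move=> Sp i; rewrite coefMXn; case: (i < n)%N. Qed.

Lemma sunit_polyC c : sunit (polyS S) c%:P -> sunit S c.
Proof.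
move=> [Sp p0 [q [Sq q0 e]]].
have := Sp 0%N; rewrite coefC eqxx => Sc.
have e0 : c * q`_0 = 1 by rewrite -coefCM e coef1.
split => //; first by rewrite polyC_eq0 in p0.
exists q`_0; split => //; apply/eqP => h; move: e0; rewrite h mulr0 => /eqP.
by rewrite eq_sym oner_eq0.
Qed.

Lemma polyC_sunit c : sunit S c -> sunit (polyS S) c%:P.
Proof.
move=> [Sc c0 [v [Sv v0 e]]]; split; [exact: polyS_C | by rewrite polyC_eq0 |].
by exists v%:P; split; [exact: polyS_C | by rewrite polyC_eq0 | by rewrite -polyCM e].
Qed.

Lemma BFS_poly_to : BFS (polyS S) -> BFS S.
Proof.
move=> /(BFS_iff polyS_semi) [l [Hsup Hpos]].
apply/(BFS_iff hS); exists (fun c => l c%:P); split.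
- move=> b c Sb b0 Sc c0; rewrite polyCM; apply: Hsup; try exact: polyS_C;
    by rewrite polyC_eq0.
- move=> b Sb b0 ub; apply: Hpos; [exact: polyS_C | by rewrite polyC_eq0 |].
  by move/sunit_polyC.
Qed.

Variable L : R -> nat.
Hypothesis HL : lenfun S L.

Definition lpoly (p : {poly R}) := ((size p).-1 + L (lead_coef p))%N.

Lemma lead_coef_neq0 (p : {poly R}) : p != 0 -> lead_coef p != 0.
Proof. by rewrite lead_coef_eq0. Qed.

Lemma lead_S p : polyS S p -> S (lead_coef p).
Proof. by move=> Sp; exact: Sp. Qed.

Lemma lpoly_sup p q : polyS S p -> p != 0 -> polyS S q -> q != 0 ->
  (lpoly p + lpoly q <= lpoly (p * q))%N.
Proof.
move=> Sp p0 Sq q0; rewrite /lpoly size_mul // lead_coefM.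
have := HL.1 _ _ (lead_S Sp) (lead_coef_neq0 p0) (lead_S Sq) (lead_coef_neq0 q0).
have := size_poly_gt0 p; have := size_poly_gt0 q; rewrite p0 q0.
move: (L (lead_coef p * lead_coef q)) (L (lead_coef p)) (L (lead_coef q)) (size p) (size q).
move=> x y z m n; lia.
Qed.

Lemma lpoly_pos p : polyS S p -> p != 0 -> ~ sunit S (lead_coef p) -> (1 <= lpoly p)%N.
Proof.
move=> Sp p0 up; rewrite /lpoly.
have := HL.2 _ (lead_S Sp) (lead_coef_neq0 p0) up; lia.
Qed.

Lemma lpoly_pos' p : polyS S p -> p != 0 -> ~ sunit (polyS S) p -> (1 <= lpoly p)%N.
Proof.
move=> Sp p0 up; case: (eqVneq (size p) 1%N) => [/eqP/size_poly1P [c c0 pc]|s1].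
  apply: lpoly_pos => //; rewrite pc lead_coefC => /polyC_sunit; by rewrite -pc.
rewrite /lpoly; have := size_poly_gt0 p; rewrite p0; move/eqP: s1; lia.
Qed.

Lemma BFS_poly_from : BFS (polyS S).
Proof.
apply/(BFS_iff polyS_semi); exists lpoly; split.
- exact: lpoly_sup.
- exact: lpoly_pos'.
Qed.

End Poly.


Lemma Xn_neq0 (R : idomainType) n : ('X^n : {poly R}) != 0.
Proof. by rewrite -size_poly_gt0 size_polyXn. Qed.

Lemma decomp (R : idomainType) (p : {poly R}) : p != 0 ->
  exists k q, [/\ p = q * 'X^k, q`_0 != 0 & forall i, q`_i = p`_(i + k)].
Proof.
move=> p0.
have ex : exists i, p`_i != 0 by exists (size p).-1; rewrite -lead_coefE lead_coef_eq0.
case: (ex_minnP ex) => k pk kmin.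
pose q := \poly_(i < size p) p`_(i + k).
have qE : forall i, q`_i = p`_(i + k).
  move=> i; rewrite coef_poly; case: ifP => // /negbT; rewrite -leqNgt => h.
  by rewrite nth_default //; apply: leq_trans h (leq_addr _ _).
exists k, q; split => //; last by rewrite qE.
apply/polyP => i; rewrite coefMXn; case: ifP => ik.
  apply/eqP; apply: contraT => h; have := kmin _ h; by rewrite leqNgt ik.
by rewrite qE subnK // leqNgt ik.
Qed.

Lemma uniq_decomp (R : idomainType) (p q : {poly R}) a b :
  p * 'X^a = q * 'X^b -> p`_0 != 0 -> q`_0 != 0 -> a = b /\ p = q.
Proof.
move=> e p0 q0.
have ab : (b <= a)%N.
  have := congr1 (fun r : {poly R} => r`_a) e; rewrite /= !coefMXn ltnn subnn.
  by case: ltnP => // _ h; move: p0; rewrite h eqxx.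
have ba : (a <= b)%N.
  have := congr1 (fun r : {poly R} => r`_b) e; rewrite /= !coefMXn ltnn subnn.
  by case: ltnP => // _ h; move: q0; rewrite -h eqxx.
have abe : a = b by apply/eqP; rewrite eqn_leq ab ba.
split => //; move: e; rewrite abe; exact: (mulIf (Xn_neq0 _ _)).
Qed.

Section Laurent.
Variables (R : idomainType) (S : R -> Prop).
Hypothesis hS : is_semidomain S.
Local Notation F := {fraction {poly R}}.

Let S0 : S 0. Proof. by case: hS. Qed.
Let S1 : S 1. Proof. by case: hS. Qed.
Let SD a b : S a -> S b -> S (a + b). Proof. by case: hS => _ _ h _; apply: h. Qed.
Let SM a b : S a -> S b -> S (a * b). Proof. by case: hS => _ _ _ h; apply: h. Qed.
Let PS := polyS_semi hS.
Let PD p q : polyS S p -> polyS S q -> polyS S (p + q). Proof. by case: PS => _ _ h _; apply: h. Qed.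
Let PM p q : polyS S p -> polyS S q -> polyS S (p * q). Proof. by case: PS => _ _ _ h; apply: h. Qed.

Lemma tXn_neq0 n : tofrac ('X^n : {poly R}) != 0 :> F.
Proof. by rewrite tofrac_eq0 Xn_neq0. Qed.

Lemma laurent_semi : is_semidomain (laurentS S).
Proof.
split.
- by exists 0, 0%N; split; [case: PS | rewrite tofrac0 mul0r].
- by exists 1, 0%N; split; [case: PS | rewrite expr0 tofrac1 divr1].
- move=> f g [p [n [Sp ->]]] [q [m [Sq ->]]].
  exists (p * 'X^m + q * 'X^n), (n + m)%N; split; first by apply: PD; apply: polyS_MXn.
  by rewrite addf_div ?tXn_neq0 // exprD tofracD !tofracM.
- move=> f g [p [n [Sp ->]]] [q [m [Sq ->]]].
  exists (p * q), (n + m)%N; split; first exact: PM.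
  by rewrite mulf_div exprD !tofracM.
Qed.

Lemma laurent_C c : S c -> laurentS S (tofrac c%:P).
Proof. by move=> Sc; exists c%:P, 0%N; split; [exact: polyS_C | rewrite expr0 tofrac1 divr1]. Qed.

Lemma tofracC_neq0 c : c != 0 -> tofrac c%:P != 0 :> F.
Proof. by rewrite tofrac_eq0 polyC_eq0. Qed.

Lemma sunit_laurentC c : S c -> sunit (laurentS S) (tofrac c%:P) -> sunit S c.
Proof.
move=> Sc [_ f0 [g [[q [n [Sq ->]]] g0 e]]].
have c0 : c != 0 by apply: contraNneq f0 => ->; rewrite tofrac0.
have h : tofrac 'X^n = tofrac c%:P * tofrac q :> F.
  by have := divfK (tXn_neq0 n) (tofrac c%:P * tofrac q); rewrite -(mulrA (tofrac c%:P)) e mul1r.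
move/eqP: h; rewrite -tofracM tofrac_eq => /eqP h.
have e1 : c * q`_n = 1 by rewrite -coefCM -h coefXn eqxx.
split => //; exists q`_n; split => //; apply/eqP => h0; move: e1; rewrite h0 mulr0 => /eqP.
by rewrite eq_sym oner_eq0.
Qed.

Lemma BFS_laurent_to : BFS (laurentS S) -> BFS S.
Proof.
move=> /(BFS_iff laurent_semi) [l [Hsup Hpos]].
apply/(BFS_iff hS); exists (fun c => l (tofrac c%:P)); split.
- move=> b c Sb b0 Sc c0; rewrite polyCM tofracM; apply: Hsup;
    by [exact: laurent_C | exact: tofracC_neq0].
- move=> b Sb b0 ub; apply: Hpos; [exact: laurent_C | exact: tofracC_neq0 |].
  by move/(sunit_laurentC Sb).
Qed.

Definition nrep (f : F) q := [/\ polyS S q, q`_0 != 0 &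
  exists k n, f = tofrac (q * 'X^k) / tofrac 'X^n].

Lemma nrep_ex f : laurentS S f -> f != 0 -> exists q, nrep f q.
Proof.
move=> [p [n [Sp fe]]] f0.
have p0 : p != 0 by apply: contraNneq f0 => p0; rewrite fe p0 tofrac0 mul0r.
have [k [q [pe q0 qE]]] := decomp p0.
exists q; split => //; last by exists k, n; rewrite -pe.
by move=> i; rewrite qE.
Qed.

Lemma nrep_uniq f q1 q2 : nrep f q1 -> nrep f q2 -> q1 = q2.
Proof.
move=> [_ q10 [k1 [n1 ->]]] [_ q20 [k2 [n2 /eqP e]]].
move: e; rewrite eqr_div ?tXn_neq0 // -!tofracM tofrac_eq -!mulrA -!exprD => /eqP e.
exact: (uniq_decomp e q10 q20).2.
Qed.

Lemma nrep_mul f g p q : nrep f p -> nrep g q -> nrep (f * g) (p * q).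
Proof.
move=> [Sp p0 [k1 [n1 ->]]] [Sq q0 [k2 [n2 ->]]]; split.
- exact: PM.
- by rewrite coef0M mulf_neq0.
- exists (k1 + k2)%N, (n1 + n2)%N; rewrite mulf_div -!tofracM exprD exprD.
  by rewrite mulrACA.
Qed.

Variable L : R -> nat.
Hypothesis HL : lenfun S L.

Definition lenL (f : F) : nat :=
  match excluded_middle_informative (exists q, nrep f q) with
  | left H => lpoly L (proj1_sig (constructive_indefinite_description _ H))
  | right _ => 0%N end.

Lemma lenL_eq f q : nrep f q -> lenL f = lpoly L q.
Proof.
move=> Hq; rewrite /lenL; case: excluded_middle_informative => [H|[]]; last by exists q.
case: constructive_indefinite_description => q' /= Hq'.
by rewrite (nrep_uniq Hq Hq').
Qed.

Lemma nrep_neq0 f q : nrep f q -> q != 0.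
Proof. by case=> _ q0 _; apply: contraNneq q0 => ->; rewrite coef0. Qed.

Lemma BFS_laurent_from : BFS (laurentS S).
Proof.
apply/(BFS_iff laurent_semi); exists lenL; split.
- move=> f g Lf f0 Lg g0.
  have [p Hp] := nrep_ex Lf f0; have [q Hq] := nrep_ex Lg g0.
  rewrite (lenL_eq Hp) (lenL_eq Hq) (lenL_eq (nrep_mul Hp Hq)).
  apply: (lpoly_sup HL); [by case: Hp | exact: nrep_neq0 Hp | by case: Hq | exact: nrep_neq0 Hq].
- move=> f Lf f0 uf.
  have [q Hq] := nrep_ex Lf f0; rewrite (lenL_eq Hq).
  have q0 := nrep_neq0 Hq; case: (Hq) => Sq _ [k [n fe]].
  apply: (lpoly_pos' hS HL Sq q0) => uq; apply: uf.
  case: (eqVneq (size q) 1%N) => [/eqP/size_poly1P [c c0 qc]|s1]; last first.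
    case: uq => _ _ [w [Sw w0 e]].
    have := size_mul q0 w0; rewrite e size_poly1 => h.
    have := size_poly_gt0 q; have := size_poly_gt0 w; rewrite q0 w0 => h1 h2.
    exfalso; move/eqP: s1 => s1; move: h h1 h2 s1; move: (size q) (size w) => a b; lia.
  have /sunit_polyC [Sc _ [v [Sv v0 cv]]] : sunit (polyS S) c%:P by rewrite -qc.
  split => //; exists (tofrac (v%:P * 'X^n) / tofrac 'X^k); split.
  + by exists (v%:P * 'X^n), k; split => //; exact: polyS_CXn.
  + apply: mulf_neq0; last by apply: invr_neq0; exact: tXn_neq0.
    rewrite tofrac_eq0; apply: mulf_neq0; [by rewrite polyC_eq0 | exact: Xn_neq0].
  + rewrite fe qc mulf_div -!tofracM.
    have -> : c%:P * 'X^k * (v%:P * 'X^n) = 'X^n * 'X^k :> {poly R}.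
      by rewrite (mulrACA c%:P) -polyCM cv mul1r mulrC.
    apply: divff; rewrite tofrac_eq0; apply: mulf_neq0; exact: Xn_neq0.
Qed.

End Laurent.

Theorem theorem4p3 (R : idomainType) (S : R -> Prop) :
  is_semidomain S ->
  (BFS S <-> BFS (polyS S)) /\ (BFS S <-> BFS (laurentS S)).
Proof.
move=> hS; split; split.
- by move=> /(BFS_iff hS) [L HL]; apply: (BFS_poly_from hS HL).
- exact: BFS_poly_to.
- by move=> /(BFS_iff hS) [L HL]; apply: (BFS_laurent_from hS HL).
- exact: BFS_laurent_to.
Qed.
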